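(* Let $k=2\kappa+1$ with $\kappa\in\{0,1,2,\dots\}$ and let $v\in C_p^{k+1}$. Then there exists a constant $C>0$, independent of $h$, such that for every $N\ge1$ (with $h=1/N$) $$\max_{1\le i\le N}|(\pi_1v-v)(x_i)|\le C\,h^{k+1}\,\|v^{(k+1)}\|_\infty .$$
   Context: $C_p$ is the space of continuous $1$-periodic real functions, and $C_p^m$ the set of $f\in C_p$ with $f^{(j)}\in C_p$ for $j=1,\dots,m$; $\|\cdot\|_\infty$ is the sup norm. For $N\ge1$, $h=1/N$, $x_i=ih$. $\mathcal{V}_h^k=\{\phi\in C_p:\ \phi|_{[x_{i-1},x_i]}\text{ is a polynomial of degree}\le k,\ i=1,\dots,N\}$. Let $\mathcal{S}_h^2=\{\phi\in\mathcal{V}_h^k:\phi(x_i)=0\ \text{for all } i\}$, $\mathcal{S}_h^1$ its $L^2(0,1)$-orthogonal complement in $\mathcal{V}_h^k$, and $\pi_1$ the $L^2(0,1)$-orthogonal projection onto $\mathcal{S}_h^1$. *)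

(* Defs.v *)
From Stdlib Require Import Reals ClassicalEpsilon.
From Coquelicot Require Import Coquelicot.
Open Scope R_scope.

Definition Cp (f : R -> R) : Prop :=
  (forall x, continuous f x) /\ (forall x, f (x + 1) = f x).

Definition Cpm (m : nat) (f : R -> R) : Prop :=
  Cp f /\
  forall j : nat, (1 <= j <= m)%nat ->
    (forall x, ex_derive_n f j x) /\ Cp (Derive_n f j).

Definition node (N i : nat) : R := INR i / INR N.

Definition Vhk (N k : nat) (phi : R -> R) : Prop :=
  Cp phi /\
  forall i : nat, (1 <= i <= N)%nat ->
    exists c : nat -> R, forall x, node N (i - 1) <= x <= node N i ->
      phi x = sum_f_R0 (fun j => c j * x ^ j) k.

Definition ip (f g : R -> R) : R := RInt (fun x => f x * g x) 0 1.

Definition Sh2 (N k : nat) (phi : R -> R) : Prop :=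
  Vhk N k phi /\ forall i : nat, phi (node N i) = 0.

Definition Sh1 (N k : nat) (psi : R -> R) : Prop :=
  Vhk N k psi /\ forall phi, Sh2 N k phi -> ip psi phi = 0.

Definition is_pi1 (N k : nat) (v w : R -> R) : Prop :=
  Sh1 N k w /\ forall psi, Sh1 N k psi -> ip (fun x => v x - w x) psi = 0.

(* pi_1 v (well defined: the projection exists and is unique) *)
Definition pi1 (N k : nat) (v : R -> R) : R -> R :=
  epsilon (inhabits (fun _ : R => 0)) (is_pi1 N k v).

Definition sup_norm (f : R -> R) : R :=
  real (Lub_Rbar (fun y => exists x, 0 <= x <= 1 /\ y = Rabs (f x))).

(* Main.v *)
Require Import Defs.
From Stdlib Require Import Reals Lra Lia ZArith ClassicalEpsilon.
From Coquelicot Require Import Coquelicot.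
Open Scope R_scope.

Definition Cont (f : R -> R) := forall x, continuous f x.

Lemma Cont_const c : Cont (fun _ => c).
Proof. intros x; apply continuous_const. Qed.
Lemma Cont_id : Cont (fun x => x).
Proof. intros x; apply continuous_id. Qed.
Lemma Cont_plus f g : Cont f -> Cont g -> Cont (fun x => f x + g x).
Proof. intros Hf Hg x; apply (continuous_plus f g); auto. Qed.
Lemma Cont_mult f g : Cont f -> Cont g -> Cont (fun x => f x * g x).
Proof. intros Hf Hg x; apply (continuous_mult f g); auto. Qed.
Lemma Cont_opp f : Cont f -> Cont (fun x => - f x).
Proof. intros Hf x; apply (continuous_opp f); auto. Qed.
Lemma Cont_minus f g : Cont f -> Cont g -> Cont (fun x => f x - g x).
Proof. intros Hf Hg; apply Cont_plus; auto; apply Cont_opp; auto. Qed.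
Lemma Cont_comp f g : Cont f -> Cont g -> Cont (fun x => g (f x)).
Proof. intros Hf Hg x; apply (continuous_comp f g); auto. Qed.
Lemma Cont_pow n : Cont (fun x => x ^ n).
Proof. induction n; simpl. apply Cont_const. apply Cont_mult; auto using Cont_id. Qed.

Fixpoint sumN (m : nat) (a : nat -> R) : R :=
  match m with O => 0 | S m' => sumN m' a + a m' end.

Definition lc (m : nat) (c : nat -> R) (f : nat -> R -> R) (x : R) : R :=
  sumN m (fun l => c l * f l x).

Lemma Cont_lc m c f : (forall l, Cont (f l)) -> Cont (lc m c f).
Proof. intros H. induction m; unfold lc in *; simpl. apply Cont_const.
  apply Cont_plus; auto. apply Cont_mult. apply Cont_const. auto. Qed.

Ltac cont1 := match goal with
 | H : Cont ?f |- Cont ?f => exact H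
 | H : forall l, Cont (?f l) |- Cont (?f ?j) => exact (H j)
 | H : Cont ?f |- Cont (fun x => ?f x) => exact H
 | H : forall l, Cont (?f l) |- Cont (fun x => ?f ?j x) => exact (H j)
 | |- Cont (fun x => @?a x + @?b x) => apply (Cont_plus a b)
 | |- Cont (fun x => @?a x - @?b x) => apply (Cont_minus a b)
 | |- Cont (fun x => @?a x * @?b x) => apply (Cont_mult a b)
 | |- Cont (fun x => - @?a x) => apply (Cont_opp a)
 | |- Cont (fun x => x) => apply Cont_id
 | |- Cont (fun x => x ^ _) => apply Cont_pow
 | |- Cont (fun _ => _) => apply Cont_const
 | H : forall l, Cont (?f l) |- forall l, Cont (?f l) => exact H
 | |- Cont (lc _ _ _) => apply Cont_lc
 | |- Cont (fun x => lc _ _ _ x) => apply Cont_lc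
 end.
Ltac cont := repeat (cont1; cbv beta).

Lemma exR f a b : Cont f -> ex_RInt f a b.
Proof. intros H; apply (@ex_RInt_continuous R_CompleteNormedModule); intros; apply H. Qed.

Lemma RInt_ext_R (f g : R -> R) a b :
  (forall x, Rmin a b < x < Rmax a b -> f x = g x) -> RInt f a b = RInt g a b.
Proof. intros H; apply RInt_ext; exact H. Qed.

Ltac toR := match goal with |- @eq _ ?a ?b => change (@eq R a b) end.

Lemma RInt_add f g a b : Cont f -> Cont g ->
  RInt (fun x => f x + g x) a b = RInt f a b + RInt g a b.
Proof. intros Hf Hg. apply (RInt_plus f g a b); apply exR; auto. Qed.

Lemma RInt_sc f a b p : Cont f -> RInt (fun x => p * f x) a b = p * RInt f a b.
Proof. intros Hf. apply (RInt_scal f a b p); apply exR; auto. Qed.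

Lemma RInt_lin f g a b p q : Cont f -> Cont g ->
  RInt (fun x => p * f x + q * g x) a b = p * RInt f a b + q * RInt g a b.
Proof. intros Hf Hg. rewrite RInt_add by cont. rewrite !RInt_sc; auto. Qed.

Lemma RInt_sub f g a b : Cont f -> Cont g ->
  RInt (fun x => f x - g x) a b = RInt f a b - RInt g a b.
Proof. intros Hf Hg. 
  rewrite (RInt_ext_R _ (fun x => 1 * f x + (-1) * g x)) by (intros; ring).
  rewrite RInt_lin; auto. toR; ring. Qed.

Lemma RInt_lin3 f g h a b p q r : Cont f -> Cont g -> Cont h ->
  RInt (fun x => p * f x + q * g x + r * h x) a b
  = p * RInt f a b + q * RInt g a b + r * RInt h a b.
Proof. intros Hf Hg Hh.
  rewrite (RInt_ext_R _ (fun x => 1 * (p * f x + q * g x) + r * h x)).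
  2: intros x _; ring.
  rewrite RInt_lin by cont. rewrite RInt_lin by cont. toR; ring. Qed.

Lemma sumN_ext m a b : (forall l, (l < m)%nat -> a l = b l) -> sumN m a = sumN m b.
Proof. induction m; simpl; intros H; auto. rewrite IHm by (intros; apply H; lia).
  rewrite H by lia; auto. Qed.
Lemma sumN_lin m a b p q : sumN m (fun l => p * a l + q * b l) = p * sumN m a + q * sumN m b.
Proof. induction m; simpl. ring. rewrite IHm; ring. Qed.
Lemma sumN_zero m a : (forall l, (l<m)%nat -> a l = 0) -> sumN m a = 0.
Proof. intros H. rewrite (sumN_ext m a (fun l => 0 * 0 + 0 * 0)).
  rewrite sumN_lin; ring. intros; rewrite H; auto; ring. Qed.
Lemma sumN_delta m j a : (j < m)%nat -> sumN m (fun l => if Nat.eqb l j then a l else 0) = a j.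
Proof. induction m; intros H; simpl. lia.
  destruct (Nat.eq_dec j m).
  - subst. rewrite Nat.eqb_refl. rewrite sumN_zero. ring.
    intros l Hl. destruct (Nat.eqb_spec l m); auto; lia.
  - rewrite IHm by lia. destruct (Nat.eqb_spec m j); [lia|ring]. Qed.
Lemma sumN_abs_le m a b : (forall l, (l<m)%nat -> Rabs (a l) <= b l) -> Rabs (sumN m a) <= sumN m b.
Proof. induction m; simpl; intros H. rewrite Rabs_R0; lra.
  eapply Rle_trans. apply Rabs_triang. apply Rplus_le_compat. apply IHm; intros; apply H; lia.
  apply H; lia. Qed.



Lemma lc_ext m c d f x : (forall l, (l<m)%nat -> c l = d l) -> lc m c f x = lc m d f x.
Proof. intros H; unfold lc; apply sumN_ext; intros; rewrite H; auto. Qed.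

Lemma RInt_lc m c f g a b : (forall l, Cont (f l)) -> Cont g ->
  RInt (fun x => g x * lc m c f x) a b = sumN m (fun l => c l * RInt (fun x => g x * f l x) a b).
Proof. intros Hf Hg. induction m; simpl.
  - rewrite (RInt_ext_R _ (fun x => 0 * g x)) by (intros; unfold lc; simpl; ring).
    rewrite RInt_sc; auto. toR; ring.
  - rewrite (RInt_ext_R _ (fun x => 1 * (g x * lc m c f x) + c m * (g x * f m x))).
    2:{ intros; unfold lc; simpl; ring. }
    rewrite RInt_lin. rewrite IHm. toR; ring.
    apply Cont_mult; auto. apply Cont_lc; auto. apply Cont_mult; auto. Qed.

Lemma ortho_of_null f g : Cont f -> Cont g -> RInt (fun x => g x * g x) 0 1 = 0 ->
  RInt (fun x => f x * g x) 0 1 = 0.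
Proof. intros Hf Hg H0.
  set (a := RInt (fun x => f x * f x) 0 1).
  set (b := RInt (fun x => f x * g x) 0 1).
  assert (Ht : forall t, 0 <= a + 2 * t * b).
  { intros t.
    assert (E : RInt (fun x => (f x + t * g x) * (f x + t * g x)) 0 1 = a + 2 * t * b).
    { rewrite (RInt_ext_R _ (fun x => 1 * (f x * f x) + (2 * t) * (f x * g x) + (t*t) * (g x * g x))).
      2:{ intros; ring. }
      rewrite RInt_lin3 by cont. rewrite H0. unfold a, b. toR; ring. }
    rewrite <- E. apply RInt_ge_0. lra. apply exR; cont. intros; apply Rle_0_sqr. }
  destruct (Req_dec b 0) as [Hb|Hb]; auto.
  specialize (Ht (- (a + 1) / (2 * b))).
  exfalso. assert (E : 2 * (- (a + 1) / (2 * b)) * b = - (a + 1)) by (field; auto). lra. Qed.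

Lemma proj_exists m (f : nat -> R -> R) : (forall l, Cont (f l)) ->
  forall v, Cont v -> exists c, forall j, (j < m)%nat ->
    RInt (fun x => (v x - lc m c f x) * f j x) 0 1 = 0.
Proof.
  intros Hf. induction m as [|m IH]; intros v Hv.
  - exists (fun _ => 0). intros; lia.
  - destruct (IH v Hv) as [c Hc]. destruct (IH (f m) (Hf m)) as [d Hd].
    set (g := fun x => f m x - lc m d f x).
    assert (Hgc : Cont g) by (unfold g; apply Cont_minus; auto; apply Cont_lc; auto).
    set (P := lc m c f).
    assert (HPc : Cont P) by (apply Cont_lc; auto).
    assert (Hfm : forall x, f m x = g x + lc m d f x) by (intros; unfold g; ring).
    destruct (Req_dec (RInt (fun x => g x * g x) 0 1) 0) as [Hz|Hz].
    + exists (fun l => if Nat.eqb l m then 0 else c l).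
      assert (EP : forall x, lc (S m) (fun l => if Nat.eqb l m then 0 else c l) f x = P x).
      { intros x. unfold lc at 1. simpl. rewrite Nat.eqb_refl.
        fold (lc m (fun l => if Nat.eqb l m then 0 else c l) f x).
        rewrite (lc_ext m _ c). unfold P; ring.
        intros l Hl. destruct (Nat.eqb_spec l m); auto; lia. }
      intros j Hj.
      rewrite (RInt_ext_R _ (fun x => (v x - P x) * f j x)) by (intros; rewrite EP; auto).
      destruct (Nat.eq_dec j m).
      * subst j.
        rewrite (RInt_ext_R _ (fun x => 1 * ((v x - P x) * g x) + 1 * ((v x - P x) * lc m d f x))).
        2:{ intros; rewrite Hfm; ring. }
        rewrite RInt_lin by cont.
        rewrite (ortho_of_null (fun x => v x - P x) g) by (try cont; auto).
        rewrite RInt_lc by cont.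
        rewrite sumN_zero. toR; ring.
        intros l Hl. unfold P. rewrite (Hc l Hl). ring.
      * unfold P; apply Hc; lia.
    + set (al := RInt (fun x => (v x - P x) * g x) 0 1 / RInt (fun x => g x * g x) 0 1).
      exists (fun l => if Nat.ltb l m then c l - al * d l else al).
      assert (EP : forall x, lc (S m) (fun l => if Nat.ltb l m then c l - al * d l else al) f x
                    = P x + al * g x).
      { intros x. unfold lc at 1. simpl. rewrite Nat.ltb_irrefl.
        fold (lc m (fun l => if Nat.ltb l m then c l - al * d l else al) f x).
        rewrite (lc_ext m _ (fun l => 1 * c l + (- al) * d l)).
        unfold lc, P. rewrite sumN_ext with (b := fun l => 1 * (c l * f l x) + (-al) * (d l * f l x)).
        rewrite sumN_lin. unfold g, lc. ring.
        intros; ring.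
        intros l Hl. destruct (Nat.ltb_spec l m); [ring|lia]. }
      assert (Hlt : forall j, (j < m)%nat -> RInt (fun x => (v x - (P x + al * g x)) * f j x) 0 1 = 0).
      { intros j Hj.
        rewrite (RInt_ext_R _ (fun x => 1 * ((v x - P x) * f j x) + (-al) * (g x * f j x))).
        2:{ intros; ring. }
        rewrite RInt_lin. unfold P. rewrite Hc by auto.
        rewrite (RInt_ext_R (fun x => g x * f j x) (fun x => (f m x - lc m d f x) * f j x)).
        rewrite Hd by auto. toR; ring. intros; unfold g; auto.
        all: cont. }
      intros j Hj.
      rewrite (RInt_ext_R _ (fun x => (v x - (P x + al * g x)) * f j x)) by (intros; rewrite EP; auto).
      destruct (Nat.eq_dec j m).
      * subst j.
        rewrite (RInt_ext_R _ (fun x => 1 * ((v x - P x) * g x) + (- al) * (g x * g x)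
                     + 1 * ((v x - (P x + al * g x)) * lc m d f x))).
        2:{ intros; rewrite Hfm; ring. }
        rewrite RInt_lin3. rewrite RInt_lc; auto.
        rewrite sumN_zero. unfold al. toR; field; auto.
        intros l Hl. rewrite Hlt; auto. ring.
        all: cont.
      * apply Hlt; lia.
Qed.
Lemma Cont_ext f g : (forall t, f t = g t) -> Cont f -> Cont g.
Proof. intros E H x. apply (continuous_ext f g). auto. auto. Qed.

Fixpoint PD (k : nat) (f : R -> R) : Prop :=
  match k with
  | O => exists c, forall t, f t = c
  | S k' => exists c g, PD k' g /\ forall t, f t = c + t * g t
  end.

Lemma PD_ext k f g : (forall t, f t = g t) -> PD k f -> PD k g.
Proof. destruct k; simpl; intros E [c H]. exists c; intros; rewrite <- E; auto.
  destruct H as [g0 [H1 H2]]. exists c, g0; split; auto; intros; rewrite <- E; auto. Qed.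

Lemma PD_const k c : PD k (fun _ => c).
Proof. revert c; induction k; intros c; simpl. exists c; auto. exists c, (fun _ => 0); split. apply IHk. intros; ring. Qed.

Lemma PD_lin k f g a b : PD k f -> PD k g -> PD k (fun t => a * f t + b * g t).
Proof. revert f g; induction k; simpl; intros f g [c Hc] [d Hd].
 exists (a*c+b*d); intros; rewrite Hc, Hd; auto.
 destruct Hc as [f1 [Hf1 Ef]]. destruct Hd as [g1 [Hg1 Eg]].
 exists (a*c+b*d), (fun t => a * f1 t + b * g1 t). split. apply IHk; auto. intros; rewrite Ef, Eg; ring. Qed.

Lemma PD_lift k f : PD k f -> PD (S k) f.
Proof. revert f; induction k; intros f H.
 - destruct H as [c Hc]. simpl. exists c, (fun _ => 0). split. exists 0; auto. intros; rewrite Hc; ring.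
 - destruct H as [c [g [Hg E]]]. exists c, g. split; auto. Qed.

Lemma PD_mono m k f : (m <= k)%nat -> PD m f -> PD k f.
Proof. induction 1; auto. intros; apply PD_lift; auto. Qed.

Lemma PD_mulx k f : PD k f -> PD (S k) (fun t => t * f t).
Proof. intros H. exists 0, f. split; auto. intros; ring. Qed.

Lemma PD_mul_lin k f a b : PD k f -> PD (S k) (fun t => (a * t + b) * f t).
Proof. intros H. apply (PD_ext _ (fun t => a * (t * f t) + b * f t)). intros; ring.
  apply PD_lin. apply PD_mulx; auto. apply PD_lift; auto. Qed.

Lemma PD_affine k f a b : PD k f -> PD k (fun t => f (a * t + b)).
Proof. revert f; induction k; intros f H.
  - destruct H as [c Hc]. exists c; intros; auto.
  - destruct H as [c [g [Hg E]]].
    apply (PD_ext _ (fun t => 1 * c + 1 * ((a * t + b) * g (a * t + b)))).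
    intros; rewrite E; ring.
    apply PD_lin. apply PD_const. apply (PD_mul_lin k (fun t => g (a * t + b))). auto. Qed.

Lemma PD_factor n g r : PD (S n) g -> exists q, PD n q /\ forall t, g t = g r + (t - r) * q t.
Proof. revert g. induction n; intros g H.
  - destruct H as [c [g1 [[c1 Hc1] E]]]. exists (fun _ => c1). split. exists c1; auto.
    intros t; rewrite !E, !Hc1; ring.
  - destruct H as [c [g1 [Hg1 E]]].
    destruct (IHn g1 Hg1) as [q1 [Hq1 E1]].
    exists (fun t => 1 * g1 r + 1 * (t * q1 t)). split.
    apply PD_lin. apply PD_const. apply PD_mulx; auto.
    intros t. rewrite !E. rewrite (E1 t). ring. Qed.

Lemma sum_shift (c : nat -> R) t k :
  sum_f_R0 (fun j => c j * t ^ j) (S k) = c O + t * sum_f_R0 (fun j => c (S j) * t ^ j) k.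
Proof. induction k. simpl; ring.
  rewrite tech5. rewrite IHk. rewrite tech5. simpl; ring. Qed.

Lemma PD_of_sum k c : PD k (fun t => sum_f_R0 (fun j => c j * t ^ j) k).
Proof. revert c; induction k; intros c.
  - exists (c O); intros; simpl; ring.
  - exists (c O), (fun t => sum_f_R0 (fun j => c (S j) * t ^ j) k). split. apply IHk.
    intros; apply sum_shift. Qed.

Lemma sum_of_PD k f : PD k f -> exists c, forall t, f t = sum_f_R0 (fun j => c j * t ^ j) k.
Proof. revert f; induction k; intros f H.
  - destruct H as [c Hc]. exists (fun _ => c). intros; simpl; rewrite Hc; ring.
  - destruct H as [c [g [Hg E]]]. destruct (IHk g Hg) as [d Hd].
    exists (fun j => match j with O => c | S j' => d j' end).
    intros t. rewrite sum_shift. rewrite E, Hd. auto. Qed.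

Lemma Cont_PD k f : PD k f -> Cont f.
Proof. revert f; induction k; intros f H.
  - destruct H as [c Hc]. apply (Cont_ext (fun _ => c)). intros; auto. cont.
  - destruct H as [c [g [Hg E]]]. apply (Cont_ext (fun t => c + t * g t)). intros; auto.
    specialize (IHk g Hg). cont. Qed.

Lemma PD_pow m : PD m (fun t => t ^ m).
Proof. induction m. exists 1; auto. apply (PD_ext _ (fun t => t * t ^ m)); auto.
  apply PD_mulx; auto. Qed.

Definition bub (m : nat) (t : R) : R := t * (1 - t) * t ^ m.

Lemma PD_bub m : PD (S (S m)) (bub m).
Proof. apply (PD_ext _ (fun t => t * ((-1 * t + 1) * t ^ m))). intros; unfold bub; ring.
  apply PD_mulx. apply PD_mul_lin. apply PD_pow. Qed.

Lemma Cont_bub : forall m, Cont (bub m).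
Proof. intros m; apply (Cont_PD _ _ (PD_bub m)). Qed.

Lemma sumN_sum n a : sumN (S n) a = sum_f_R0 a n.
Proof. induction n. simpl; ring. simpl in *. rewrite IHn. auto. Qed.

Lemma bubble_expand n b : PD (S n) b -> b 0 = 0 -> b 1 = 0 ->
  exists d, forall t, b t = lc n d bub t.
Proof. intros H H0 H1.
  destruct (PD_factor n b 0 H) as [q [Hq Eq]].
  assert (Hq1 : q 1 = 0). { specialize (Eq 1). rewrite H0, H1 in Eq. lra. }
  destruct n as [|n].
  - exists (fun _ => 0). destruct Hq as [c1 Hc1]. intros t. rewrite Eq, H0, Hc1.
    rewrite Hc1 in Hq1. rewrite Hq1. unfold lc; simpl; ring.
  - destruct (PD_factor n q 1 Hq) as [r [Hr Er]].
    destruct (sum_of_PD n r Hr) as [e He].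
    exists (fun j => - e j). intros t. rewrite Eq, H0, Er, Hq1.
    unfold lc. rewrite sumN_sum. rewrite He.
    rewrite Rplus_0_l, Rplus_0_l, Rminus_0_r.
    rewrite scal_sum. rewrite scal_sum.
    apply sum_eq. intros i _. unfold bub; ring. Qed.
Lemma cont_eps f x : continuous f x -> forall eps, 0 < eps ->
  exists d, 0 < d /\ forall y, Rabs (y - x) < d -> Rabs (f y - f x) < eps.
Proof. intros H eps He. apply continuity_pt_filterlim in H.
  destruct (H eps He) as [d [Hd Hy]]. exists d; split; auto. intros y Hyd.
  destruct (Req_dec y x). subst. rewrite Rminus_eq_0, Rabs_R0; auto.
  apply Hy. split. split; auto. exact I. auto. Qed.

Lemma eps_cont f x : (forall eps, 0 < eps ->
  exists d, 0 < d /\ forall y, Rabs (y - x) < d -> Rabs (f y - f x) < eps) -> continuous f x.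
Proof. intros H. apply continuity_pt_filterlim. intros eps He.
  destruct (H eps He) as [d [Hd Hy]]. exists d; split; auto. intros y [_ Hyd]. apply Hy; auto. Qed.

Lemma pos_int g : Cont g -> g 0 <> 0 -> 0 < RInt (fun x => g x * g x) 0 1.
Proof. intros Hg H0.
  assert (Ha : 0 < Rabs (g 0) / 2) by (apply Rabs_pos_lt in H0; lra).
  destruct (cont_eps g 0 (Hg 0) _ Ha) as [d [Hd Hy]].
  set (e := Rmin (d / 2) (1 / 2)).
  assert (He0 : 0 < e) by (unfold e; apply Rmin_pos; lra).
  assert (He1 : e < 1) by (unfold e; assert (Rmin (d/2) (1/2) <= 1/2) by apply Rmin_r; lra).
  assert (He2 : e < d) by (unfold e; assert (Rmin (d/2) (1/2) <= d/2) by apply Rmin_l; lra).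
  assert (Hc : Cont (fun x => g x * g x)) by cont.
  rewrite <- (RInt_Chasles (fun x => g x * g x) 0 e 1) by (apply exR; auto).
  change (0 < RInt (fun x => g x * g x) 0 e + RInt (fun x => g x * g x) e 1).
  assert (P1 : 0 < RInt (fun x => g x * g x) 0 e).
  { apply RInt_gt_0; auto. intros x Hx.
    assert (Rabs (g x - g 0) < Rabs (g 0) / 2) by (apply Hy; rewrite Rminus_0_r, Rabs_right; lra).
    assert (g x <> 0).
    { intros E; rewrite E in H; rewrite Rminus_0_l, Rabs_Ropp in H; lra. }
    assert (0 < g x * g x). { destruct (Rlt_or_le 0 (g x)). nra. assert (g x < 0) by lra. nra. }
    auto. }
  assert (P2 : 0 <= RInt (fun x => g x * g x) e 1).
  { apply RInt_ge_0. lra. apply exR; auto. intros; apply Rle_0_sqr. }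
  lra. Qed.

Lemma PD_lc k m c f : (forall l, (l < m)%nat -> PD k (f l)) -> PD k (lc m c f).
Proof. induction m; intros H; unfold lc; simpl.
  apply PD_const.
  apply (PD_ext _ (fun t => 1 * lc m c f t + c m * f m t)). intros; unfold lc; ring.
  apply PD_lin. apply IHm; intros; apply H; lia. apply H; lia. Qed.

Lemma lc_bub0 n c : lc n c bub 0 = 0.
Proof. unfold lc. apply sumN_zero. intros; unfold bub; ring. Qed.
Lemma lc_bub1 n c : lc n c bub 1 = 0.
Proof. unfold lc. apply sumN_zero. intros; unfold bub; ring. Qed.

Lemma ref_exists n : exists phi0 phi1 : R -> R,
  PD (S n) phi0 /\ PD (S n) phi1 /\ phi0 0 = 1 /\ phi0 1 = 0 /\ phi1 0 = 0 /\ phi1 1 = 1 /\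
  (forall b, PD (S n) b -> b 0 = 0 -> b 1 = 0 ->
     RInt (fun t => b t * phi0 t) 0 1 = 0 /\ RInt (fun t => b t * phi1 t) 0 1 = 0).
Proof.
  assert (Hb := Cont_bub).
  destruct (proj_exists n bub Hb (fun t => 1 - t)) as [c0 Hc0]. cont.
  destruct (proj_exists n bub Hb (fun t => t)) as [c1 Hc1]. cont.
  assert (PDl : forall c, PD (S n) (lc n c bub)).
  { intros c; apply PD_lc. intros l Hl. apply (PD_mono (S (S l))). lia. apply PD_bub. }
  exists (fun t => 1 - t - lc n c0 bub t), (fun t => t - lc n c1 bub t).
  split. apply (PD_ext _ (fun t => 1 * (-1 * t + 1) + (-1) * lc n c0 bub t)). intros; ring.
  apply PD_lin; auto. apply (PD_mono 1). lia. apply (PD_ext _ (fun t => (-1 * t + 1) * 1)). intros; ring.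
  apply PD_mul_lin. apply PD_const.
  split. apply (PD_ext _ (fun t => 1 * (t * 1) + (-1) * lc n c1 bub t)). intros; ring.
  apply PD_lin; auto. apply (PD_mono 1). lia. apply PD_mulx. apply PD_const.
  rewrite !lc_bub0, !lc_bub1. split. ring. split. ring. split. ring. split. ring.
  intros b Hb1 B0 B1. destruct (bubble_expand n b Hb1 B0 B1) as [d Hd].
  split.
  - rewrite (RInt_ext_R _ (fun t => (1 - t - lc n c0 bub t) * lc n d bub t)).
    2:{ intros; rewrite Hd; ring. }
    rewrite RInt_lc by cont. apply sumN_zero. intros l Hl. rewrite Hc0 by auto. ring.
  - rewrite (RInt_ext_R _ (fun t => (t - lc n c1 bub t) * lc n d bub t)).
    2:{ intros; rewrite Hd; ring. }
    rewrite RInt_lc by cont. apply sumN_zero. intros l Hl. rewrite Hc1 by auto. ring.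
Qed.
Definition glue (NR : R) (L : Z -> R -> R) (x : R) : R :=
  L (Int_part (NR * x)) (NR * x - IZR (Int_part (NR * x))).

Definition GlueOK (L : Z -> R -> R) := forall z, L z 1 = L (z + 1)%Z 0.

Lemma glue_cell NR L x z : GlueOK L -> IZR z <= NR * x <= IZR z + 1 ->
  glue NR L x = L z (NR * x - IZR z).
Proof. intros HL [H1 H2]. unfold glue.
  destruct (Rlt_or_le (NR * x) (IZR z + 1)).
  - rewrite <- (Int_part_spec (NR * x) z); auto. lra.
  - assert (E : NR * x = IZR (z + 1)) by (rewrite plus_IZR; simpl; lra).
    rewrite <- (Int_part_spec (NR * x) (z + 1)) by lra.
    rewrite E, plus_IZR. replace (IZR z + IZR 1 - IZR z) with 1 by (simpl; ring).
    rewrite Rminus_eq_0. rewrite HL. auto. Qed.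

Lemma near_scale NR x y a : 0 < NR -> Rabs (y - x) < a / NR ->
  NR * x - a < NR * y < NR * x + a.
Proof. intros HN H. apply Rabs_def2 in H. destruct H as [H1 H2].
  assert (E : NR * (a / NR) = a) by (field; lra).
  split.
  - assert (NR * (- (a / NR)) < NR * (y - x)) by (apply Rmult_lt_compat_l; lra). nra.
  - assert (NR * (y - x) < NR * (a / NR)) by (apply Rmult_lt_compat_l; lra). nra. Qed.

Lemma Cont_affine_comp f a b : Cont f -> Cont (fun y => f (a * y + b)).
Proof. intros H. apply (Cont_comp (fun y => a * y + b) f); auto. cont. Qed.

Lemma glue_cont NR L : 0 < NR -> GlueOK L -> (forall z, Cont (L z)) -> Cont (glue NR L).
Proof. intros HN HL HC x. apply eps_cont. intros eps He.
  set (z := Int_part (NR * x)).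
  assert (Hz := base_Int_part (NR * x)). fold z in Hz.
  set (g1 := fun y => L z (NR * y + - IZR z)).
  set (g2 := fun y => L (z - 1)%Z (NR * y + - IZR (z - 1))).
  assert (C1 : Cont g1) by (apply Cont_affine_comp; auto).
  assert (C2 : Cont g2) by (apply Cont_affine_comp; auto).
  destruct (cont_eps g1 x (C1 x) eps He) as [d1 [Hd1 H1]].
  destruct (cont_eps g2 x (C2 x) eps He) as [d2 [Hd2 H2]].
  assert (Gx : glue NR L x = g1 x).
  { unfold g1. rewrite (glue_cell NR L x z) by (auto; lra). unfold Rminus; auto. }
  assert (Ez : IZR (z - 1) = IZR z - 1) by (rewrite minus_IZR; simpl; ring).
  destruct (Req_dec (NR * x) (IZR z)) as [E0|E0].
  - assert (G2x : g2 x = g1 x).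
    { unfold g1, g2. rewrite E0, Ez. replace (IZR z + - (IZR z - 1)) with 1 by ring.
      rewrite HL. replace (z - 1 + 1)%Z with z by ring. f_equal; ring. }
    exists (Rmin (Rmin d1 d2) (1 / NR)). split.
    { apply Rmin_pos. apply Rmin_pos; auto. apply Rdiv_lt_0_compat; lra. }
    intros y Hy.
    assert (Hy1 : Rabs (y - x) < d1) by (eapply Rlt_le_trans; [apply Hy| eapply Rle_trans; [apply Rmin_l|apply Rmin_l]]).
    assert (Hy2 : Rabs (y - x) < d2) by (eapply Rlt_le_trans; [apply Hy| eapply Rle_trans; [apply Rmin_l|apply Rmin_r]]).
    assert (Hy3 : Rabs (y - x) < 1 / NR) by (eapply Rlt_le_trans; [apply Hy| apply Rmin_r]).
    apply near_scale in Hy3; auto.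
    rewrite Gx.
    destruct (Rle_or_lt (IZR z) (NR * y)).
    + rewrite (glue_cell NR L y z); auto. 2: lra.
      replace (NR * y - IZR z) with (NR * y + - IZR z) by ring. apply H1; auto.
    + rewrite (glue_cell NR L y (z - 1)); auto. 2: rewrite Ez; lra.
      rewrite <- G2x. replace (NR * y - IZR (z - 1)) with (NR * y + - IZR (z - 1)) by ring.
      apply H2; auto.
  - set (s := NR * x - IZR z).
    assert (Hs : 0 < s /\ s < 1) by (unfold s; lra).
    exists (Rmin d1 (Rmin (s / NR) ((1 - s) / NR))). split.
    { apply Rmin_pos; auto. apply Rmin_pos; apply Rdiv_lt_0_compat; lra. }
    intros y Hy.
    assert (Hy1 : Rabs (y - x) < d1) by (eapply Rlt_le_trans; [apply Hy| apply Rmin_l]).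
    assert (Hy2 : Rabs (y - x) < s / NR) by (eapply Rlt_le_trans; [apply Hy| eapply Rle_trans; [apply Rmin_r|apply Rmin_l]]).
    assert (Hy3 : Rabs (y - x) < (1 - s) / NR) by (eapply Rlt_le_trans; [apply Hy| eapply Rle_trans; [apply Rmin_r|apply Rmin_r]]).
    apply near_scale in Hy2; auto. apply near_scale in Hy3; auto.
    rewrite Gx. rewrite (glue_cell NR L y z); auto. 2: unfold s in *; lra.
    replace (NR * y - IZR z) with (NR * y + - IZR z) by ring. apply H1; auto.
Qed.

Lemma glue_per N L : (forall z t, L (z + Z.of_nat N)%Z t = L z t) ->
  forall x, glue (INR N) L (x + 1) = glue (INR N) L x.
Proof. intros HP x. unfold glue.
  assert (Hz := base_Int_part (INR N * x)).
  set (z := Int_part (INR N * x)) in *.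
  assert (E : Int_part (INR N * (x + 1)) = (z + Z.of_nat N)%Z).
  { symmetry; apply Int_part_spec. rewrite plus_IZR, <- INR_IZR_INZ. lra. }
  rewrite E, HP. f_equal. rewrite plus_IZR, <- INR_IZR_INZ. ring. Qed.
Definition cx (N z : nat) (t : R) : R := (INR z + t) / INR N.

Lemma RInt_cell F a h : Cont F -> RInt F a (a + h) = h * RInt (fun t => F (h * t + a)) 0 1.
Proof. intros H.
  rewrite <- RInt_sc by (apply Cont_affine_comp; auto).
  assert (E := RInt_comp_lin F h a 0 1 (exR _ _ _ H)).
  replace (h * 0 + a) with a in E by ring. replace (h * 1 + a) with (a + h) in E by ring.
  rewrite <- E. apply RInt_ext_R. intros; reflexivity.
Qed.

Lemma INR_pos N : (1 <= N)%nat -> 0 < INR N.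
Proof. intros H. apply lt_0_INR. lia. Qed.

Lemma int_cells N F : (1 <= N)%nat -> Cont F ->
  RInt F 0 1 = sumN N (fun z => / INR N * RInt (fun t => F (cx N z t)) 0 1).
Proof. intros HN HF. assert (HNp := INR_pos N HN).
  assert (G : forall m, RInt F 0 (INR m / INR N) = sumN m (fun z => / INR N * RInt (fun t => F (cx N z t)) 0 1)).
  { induction m. simpl. replace (0 / INR N) with 0 by (field; lra). exact (RInt_point (V:=R_CompleteNormedModule) 0 F).
    simpl sumN. rewrite <- IHm.
    replace (INR (S m) / INR N) with (INR m / INR N + / INR N) by (rewrite S_INR; field; lra).
    rewrite <- (RInt_Chasles F 0 (INR m / INR N)) by (apply exR; auto).
    rewrite RInt_cell by auto. toR. change (plus ?a ?b) with (a + b). f_equal. f_equal. apply RInt_ext_R. intros; unfold cx; f_equal; field; lra. }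
  rewrite <- G. f_equal. field; lra. Qed.

Definition jp (N j : nat) : nat := if Nat.eqb j 0 then (N - 1)%nat else (j - 1)%nat.

Lemma jp_lt N j : (1 <= N)%nat -> (j < N)%nat -> (jp N j < N)%nat.
Proof. unfold jp; destruct (Nat.eqb_spec j 0); lia. Qed.

Definition Ltpl (N : nat) (phi0 phi1 : R -> R) (j : nat) (z : Z) (t : R) : R :=
  (if Z.eqb (z mod Z.of_nat N) (Z.of_nat j) then phi0 t else 0) +
  (if Z.eqb ((z + 1) mod Z.of_nat N) (Z.of_nat j) then phi1 t else 0).

Definition Phi N phi0 phi1 j := glue (INR N) (Ltpl N phi0 phi1 j).

Definition RefOK n (phi0 phi1 : R -> R) :=
  PD (S n) phi0 /\ PD (S n) phi1 /\ phi0 0 = 1 /\ phi0 1 = 0 /\ phi1 0 = 0 /\ phi1 1 = 1 /\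
  (forall b, PD (S n) b -> b 0 = 0 -> b 1 = 0 ->
     RInt (fun t => b t * phi0 t) 0 1 = 0 /\ RInt (fun t => b t * phi1 t) 0 1 = 0).

Lemma Ltpl_ok n N phi0 phi1 j : RefOK n phi0 phi1 -> GlueOK (Ltpl N phi0 phi1 j).
Proof. intros (_ & _ & H00 & H01 & H10 & H11 & _) z. unfold Ltpl.
  replace (z + 1 + 1)%Z with ((z + 1) + 1)%Z by ring.
  destruct (Z.eqb (z mod Z.of_nat N) (Z.of_nat j)); destruct (Z.eqb ((z+1) mod Z.of_nat N) (Z.of_nat j));
  destruct (Z.eqb ((z+1+1) mod Z.of_nat N) (Z.of_nat j)); rewrite ?H00, ?H01, ?H10, ?H11; ring. Qed.

Lemma Ltpl_per N phi0 phi1 j : forall z t, Ltpl N phi0 phi1 j (z + Z.of_nat N)%Z t = Ltpl N phi0 phi1 j z t.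
Proof. intros z t. unfold Ltpl.
  replace (z + Z.of_nat N)%Z with (z + 1 * Z.of_nat N)%Z by ring.
  replace (z + 1 * Z.of_nat N + 1)%Z with ((z + 1) + 1 * Z.of_nat N)%Z by ring.
  rewrite !Z_mod_plus_full. auto. Qed.

Lemma Ltpl_cont n N phi0 phi1 j : RefOK n phi0 phi1 -> forall z, Cont (Ltpl N phi0 phi1 j z).
Proof. intros (P0 & P1 & _) z. apply Cont_PD in P0. apply Cont_PD in P1. unfold Ltpl.
  destruct (Z.eqb (z mod Z.of_nat N) (Z.of_nat j)); destruct (Z.eqb ((z+1) mod Z.of_nat N) (Z.of_nat j)); cont. Qed.

Lemma Phi_cont n N phi0 phi1 j : (1 <= N)%nat -> RefOK n phi0 phi1 -> Cont (Phi N phi0 phi1 j).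
Proof. intros HN HR. apply glue_cont. apply INR_pos; auto. eapply Ltpl_ok; eauto. eapply Ltpl_cont; eauto. Qed.

Lemma Phi_per N phi0 phi1 j x : Phi N phi0 phi1 j (x + 1) = Phi N phi0 phi1 j x.
Proof. apply glue_per. apply Ltpl_per. Qed.

Lemma Z_eqb_nat a b : Z.eqb (Z.of_nat a) (Z.of_nat b) = Nat.eqb a b.
Proof. destruct (Z.eqb_spec (Z.of_nat a) (Z.of_nat b)); destruct (Nat.eqb_spec a b); lia. Qed.

Lemma mod_eq1 N z j : (z < N)%nat -> Z.eqb (Z.of_nat z mod Z.of_nat N) (Z.of_nat j) = Nat.eqb z j.
Proof. intros H. rewrite Z.mod_small by lia. apply Z_eqb_nat. Qed.

Lemma mod_eq2 N z j : (z < N)%nat -> (j < N)%nat ->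
  Z.eqb ((Z.of_nat z + 1) mod Z.of_nat N) (Z.of_nat j) = Nat.eqb z (jp N j).
Proof. intros Hz Hj. unfold jp.
  destruct (Nat.eq_dec (S z) N).
  - replace (Z.of_nat z + 1)%Z with (Z.of_nat N) by lia. rewrite Z_mod_same_full.
    destruct (Nat.eqb_spec j 0); destruct (Z.eqb_spec 0 (Z.of_nat j)); destruct (Nat.eqb_spec z (N-1));
    destruct (Nat.eqb_spec z (j-1)); auto; lia.
  - rewrite Z.mod_small by lia.
    destruct (Nat.eqb_spec j 0); destruct (Z.eqb_spec (Z.of_nat z + 1) (Z.of_nat j)); destruct (Nat.eqb_spec z (N-1));
    destruct (Nat.eqb_spec z (j-1)); auto; lia. Qed.

Lemma Phi_cell n N phi0 phi1 j z t : (1 <= N)%nat -> RefOK n phi0 phi1 -> (z < N)%nat -> (j < N)%nat ->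
  0 <= t <= 1 ->
  Phi N phi0 phi1 j (cx N z t) = (if Nat.eqb z j then phi0 t else 0) + (if Nat.eqb z (jp N j) then phi1 t else 0).
Proof. intros HN HR Hz Hj Ht. assert (HNp := INR_pos N HN). unfold Phi.
  assert (E : INR N * cx N z t = IZR (Z.of_nat z) + t) by (unfold cx; rewrite <- INR_IZR_INZ; field; lra).
  rewrite (glue_cell _ _ _ (Z.of_nat z)). 2: eapply Ltpl_ok; eauto. 2: lra.
  rewrite E. replace (IZR (Z.of_nat z) + t - IZR (Z.of_nat z)) with t by ring.
  unfold Ltpl. rewrite mod_eq1, mod_eq2; auto. Qed.

Definition node' (N i : nat) := node N i.

Lemma Phi_node n N phi0 phi1 j i : (1 <= N)%nat -> RefOK n phi0 phi1 ->
  Phi N phi0 phi1 j (node N i) = if Nat.eqb (i mod N) j then 1 else 0.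
Proof. intros HN HR. assert (HNp := INR_pos N HN). unfold Phi.
  assert (HR' := HR). destruct HR' as (P0 & P1 & H00 & H01 & H10 & H11 & _).
  assert (E : INR N * node N i = IZR (Z.of_nat i)) by (unfold node; rewrite <- INR_IZR_INZ; field; lra).
  rewrite (glue_cell _ _ _ (Z.of_nat i)). 2: eapply Ltpl_ok; eauto. 2: lra.
  rewrite E, Rminus_eq_0. unfold Ltpl. rewrite H00, H10.
  rewrite <- Nat2Z.inj_mod. rewrite Z_eqb_nat.
  destruct (Nat.eqb (i mod N) j); destruct (Z.eqb _ _); ring. Qed.

Definition cellPD N k F := forall z, (z < N)%nat ->
  exists p, PD k p /\ forall t, 0 <= t <= 1 -> F (cx N z t) = p t.

Lemma cellPD_lin N k F G a b : cellPD N k F -> cellPD N k G -> cellPD N k (fun x => a * F x + b * G x).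
Proof. intros HF HG z Hz. destruct (HF z Hz) as [p [Hp Ep]]. destruct (HG z Hz) as [q [Hq Eq]].
  exists (fun t => a * p t + b * q t). split. apply PD_lin; auto. intros; rewrite Ep, Eq; auto. Qed.

Lemma cellPD_ext N k F G : (forall x, F x = G x) -> cellPD N k F -> cellPD N k G.
Proof. intros E HF z Hz. destruct (HF z Hz) as [p [Hp Ep]]. exists p; split; auto. intros; rewrite <- E; auto. Qed.

Lemma cellPD_lc N k m c f : (forall l, (l < m)%nat -> cellPD N k (f l)) -> cellPD N k (lc m c f).
Proof. intros H. induction m.
  - apply (cellPD_ext N k (fun _ => 0)). intros; unfold lc; auto.
    intros z Hz. exists (fun _ => 0). split. apply PD_const. auto.
  - apply (cellPD_ext N k (fun x => 1 * lc m c f x + c m * f m x)). intros; unfold lc; simpl; ring.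
    apply cellPD_lin. apply IHm; intros; apply H; lia. apply H; lia. Qed.

Lemma Phi_cellPD n N phi0 phi1 j : (1 <= N)%nat -> RefOK n phi0 phi1 -> (j < N)%nat ->
  cellPD N (S n) (Phi N phi0 phi1 j).
Proof. intros HN HR Hj z Hz.
  exists (fun t => (if Nat.eqb z j then phi0 t else 0) + (if Nat.eqb z (jp N j) then phi1 t else 0)).
  split. 2: intros; eapply Phi_cell; eauto.
  destruct HR as (P0 & P1 & _).
  destruct (Nat.eqb z j); destruct (Nat.eqb z (jp N j)).
  - apply (PD_ext _ (fun t => 1 * phi0 t + 1 * phi1 t)). intros; ring. apply PD_lin; auto.
  - apply (PD_ext _ (fun t => 1 * phi0 t + 0 * phi1 t)). intros; ring. apply PD_lin; auto.
  - apply (PD_ext _ (fun t => 0 * phi0 t + 1 * phi1 t)). intros; ring. apply PD_lin; auto.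
  - apply (PD_ext _ (fun t => 0)). intros; ring. apply PD_const. Qed.
Lemma cx0 N z : cx N z 0 = node N z.
Proof. unfold cx, node. f_equal; ring. Qed.
Lemma cx1 N z : cx N z 1 = node N (S z).
Proof. unfold cx, node. rewrite S_INR. auto. Qed.

Lemma Vhk_cellPD N k F : (1 <= N)%nat -> Vhk N k F -> cellPD N k F.
Proof. intros HN [Hcp Hloc] z Hz. assert (HNp := INR_pos N HN).
  destruct (Hloc (S z)) as [c Hc]. lia.
  replace (S z - 1)%nat with z in Hc by lia.
  exists (fun t => (fun x => sum_f_R0 (fun j => c j * x ^ j) k) (/ INR N * t + INR z / INR N)).
  split. apply (PD_affine k (fun x => sum_f_R0 (fun j => c j * x ^ j) k)). apply PD_of_sum.
  intros t Ht. rewrite Hc. unfold cx. replace (/ INR N * t + INR z / INR N) with ((INR z + t) / INR N) by (field; lra). reflexivity.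
  unfold cx, node. rewrite S_INR. split.
  apply Rmult_le_compat_r. left; apply Rinv_0_lt_compat; lra. lra.
  apply Rmult_le_compat_r. left; apply Rinv_0_lt_compat; lra. lra. Qed.

Lemma cellPD_Vhk N k F : (1 <= N)%nat -> Cp F -> cellPD N k F -> Vhk N k F.
Proof. intros HN Hcp HF. assert (HNp := INR_pos N HN). split; auto.
  intros i Hi. destruct (HF (i - 1)%nat) as [p [Hp Ep]]. lia.
  destruct (sum_of_PD k (fun x => p (INR N * x + - INR (i - 1)))) as [c Hc].
  apply (PD_affine k p); auto.
  exists c. intros x Hx. rewrite <- Hc.
  unfold node in Hx.
  assert (Ei : INR i = INR (i - 1) + 1) by (rewrite <- S_INR; f_equal; lia).
  rewrite Ei in Hx.
  assert (H1 : INR (i - 1) <= INR N * x).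
  { destruct Hx as [Hx _]. apply (Rmult_le_compat_l (INR N)) in Hx. 2: lra.
    replace (INR N * (INR (i - 1) / INR N)) with (INR (i - 1)) in Hx by (field; lra). auto. }
  assert (H2 : INR N * x <= INR (i - 1) + 1).
  { destruct Hx as [_ Hx]. apply (Rmult_le_compat_l (INR N)) in Hx. 2: lra.
    replace (INR N * ((INR (i - 1) + 1) / INR N)) with (INR (i - 1) + 1) in Hx by (field; lra). auto. }
  rewrite <- Ep. f_equal. unfold cx. field. lra. lra. Qed.

Lemma per_nat (F : R -> R) : (forall x, F (x + 1) = F x) -> forall m x, F (x + INR m) = F x.
Proof. intros HP m. induction m; intros x. simpl. rewrite Rplus_0_r; auto.
  rewrite S_INR. replace (x + (INR m + 1)) with ((x + INR m) + 1) by ring. rewrite HP; auto. Qed.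

Lemma node_mod (F : R -> R) N i : (1 <= N)%nat -> (forall x, F (x + 1) = F x) -> F (node N i) = F (node N (i mod N)).
Proof. intros HN HP. assert (HNp := INR_pos N HN).
  replace (node N i) with (node N (i mod N) + INR (i / N)). apply per_nat; auto.
  unfold node. rewrite (Nat.div_mod_eq i N) at 3. rewrite plus_INR, mult_INR. field. lra. Qed.

Lemma lc_nodes n N phi0 phi1 psi i : (1 <= N)%nat -> RefOK n phi0 phi1 -> (forall x, psi (x + 1) = psi x) ->
  lc N (fun l => psi (node N l)) (Phi N phi0 phi1) (node N i) = psi (node N i).
Proof. intros HN HR HP. unfold lc.
  rewrite (sumN_ext _ _ (fun l => if Nat.eqb l (i mod N) then psi (node N l) else 0)).
  rewrite sumN_delta. symmetry; apply node_mod; auto. apply Nat.mod_upper_bound; lia.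
  intros l Hl. rewrite (Phi_node n); auto. destruct (Nat.eqb_spec (i mod N) l); destruct (Nat.eqb_spec l (i mod N)); try lia; ring. Qed.

Lemma lc_per m c f : (forall l x, f l (x + 1) = f l x) -> forall x, lc m c f (x + 1) = lc m c f x.
Proof. intros H x. unfold lc. apply sumN_ext. intros; rewrite H; auto. Qed.

Lemma ip_Phi n N phi0 phi1 j G : (1 <= N)%nat -> RefOK n phi0 phi1 -> (j < N)%nat -> Cont G ->
  ip G (Phi N phi0 phi1 j) = / INR N * (RInt (fun t => G (cx N j t) * phi0 t) 0 1
                                     + RInt (fun t => G (cx N (jp N j) t) * phi1 t) 0 1).
Proof. intros HN HR Hj HG. unfold ip.
  assert (HNp := INR_pos N HN).
  assert (HPc := Phi_cont n N phi0 phi1 j HN HR).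
  assert (HR' := HR). destruct HR' as (P0 & P1 & _). apply Cont_PD in P0. apply Cont_PD in P1.
  rewrite (int_cells N); auto. 2: cont.
  rewrite (sumN_ext _ _ (fun z => / INR N * (if Nat.eqb z j then RInt (fun t => G (cx N z t) * phi0 t) 0 1 else 0)
      + / INR N * (if Nat.eqb z (jp N j) then RInt (fun t => G (cx N z t) * phi1 t) 0 1 else 0))).
  rewrite sumN_lin. rewrite !sumN_delta; auto. ring. apply jp_lt; auto.
  intros z Hz.
  rewrite (RInt_ext_R _ (fun t => (if Nat.eqb z j then 1 else 0) * (G (cx N z t) * phi0 t)
                              + (if Nat.eqb z (jp N j) then 1 else 0) * (G (cx N z t) * phi1 t))).
  2:{ intros t Ht. rewrite Rmin_left, Rmax_right in Ht by lra.
      rewrite (Phi_cell n); auto. 2: lra. destruct (Nat.eqb z j); destruct (Nat.eqb z (jp N j)); ring. }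
  assert (Cg : Cont (fun t => G (cx N z t))).
  { apply (Cont_ext (fun t => G (/ INR N * t + INR z / INR N))). intros; unfold cx; f_equal; field; lra.
    apply Cont_affine_comp; auto. }
  rewrite RInt_lin by cont.
  destruct (Nat.eqb z j); destruct (Nat.eqb z (jp N j)); ring. Qed.

Lemma loc_int n phi0 phi1 p : RefOK n phi0 phi1 -> PD (S n) p ->
  RInt (fun t => p t * phi0 t) 0 1 = p 0 * RInt (fun t => phi0 t * phi0 t) 0 1 + p 1 * RInt (fun t => phi0 t * phi1 t) 0 1 /\
  RInt (fun t => p t * phi1 t) 0 1 = p 0 * RInt (fun t => phi0 t * phi1 t) 0 1 + p 1 * RInt (fun t => phi1 t * phi1 t) 0 1.
Proof. intros HR Hp. destruct HR as (P0 & P1 & H00 & H01 & H10 & H11 & Hort).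
  set (b := fun t => p t - p 0 * phi0 t - p 1 * phi1 t).
  assert (Hb : PD (S n) b).
  { apply (PD_ext _ (fun t => 1 * p t + 1 * ((- p 0) * phi0 t + (- p 1) * phi1 t))). intros; unfold b; ring.
    apply PD_lin; auto. apply PD_lin; auto. }
  destruct (Hort b Hb) as [O0 O1]. unfold b; rewrite H00, H10; ring. unfold b; rewrite H01, H11; ring.
  apply Cont_PD in P0. apply Cont_PD in P1. assert (Cb := Cont_PD _ _ Hb).
  split.
  - rewrite (RInt_ext_R _ (fun t => 1 * (b t * phi0 t) + p 0 * (phi0 t * phi0 t) + p 1 * (phi0 t * phi1 t))).
    2:{ intros; unfold b; ring. }
    rewrite RInt_lin3 by cont. rewrite O0. toR; ring.
  - rewrite (RInt_ext_R _ (fun t => 1 * (b t * phi1 t) + p 0 * (phi0 t * phi1 t) + p 1 * (phi1 t * phi1 t))).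
    2:{ intros; unfold b; ring. }
    rewrite RInt_lin3 by cont. rewrite O1. toR; ring. Qed.


Lemma ip_Phi_PD n N phi0 phi1 j F : (1 <= N)%nat -> RefOK n phi0 phi1 -> (j < N)%nat -> Cont F ->
  cellPD N (S n) F ->
  ip F (Phi N phi0 phi1 j) = / INR N *
    (F (node N j) * RInt (fun t => phi0 t * phi0 t) 0 1 + F (node N (S j)) * RInt (fun t => phi0 t * phi1 t) 0 1
   + F (node N (jp N j)) * RInt (fun t => phi0 t * phi1 t) 0 1 + F (node N (S (jp N j))) * RInt (fun t => phi1 t * phi1 t) 0 1).
Proof. intros HN HR Hj HF HP. rewrite (ip_Phi n); auto.
  destruct (HP j Hj) as [p [Hp Ep]]. destruct (HP (jp N j)) as [q [Hq Eq]]. apply jp_lt; auto.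
  rewrite (RInt_ext_R (fun t => F (cx N j t) * phi0 t) (fun t => p t * phi0 t)).
  2:{ intros t Ht. rewrite Rmin_left, Rmax_right in Ht by lra. rewrite Ep; auto; lra. }
  rewrite (RInt_ext_R (fun t => F (cx N (jp N j) t) * phi1 t) (fun t => q t * phi1 t)).
  2:{ intros t Ht. rewrite Rmin_left, Rmax_right in Ht by lra. rewrite Eq; auto; lra. }
  destruct (loc_int n phi0 phi1 p HR Hp) as [L1 _]. destruct (loc_int n phi0 phi1 q HR Hq) as [_ L2].
  rewrite L1, L2. rewrite <- !cx1, <- !cx0. rewrite !Ep, !Eq by lra. ring. Qed.

Lemma Phi_Sh1 n N phi0 phi1 j : (1 <= N)%nat -> RefOK n phi0 phi1 -> (j < N)%nat ->
  Sh1 N (S n) (Phi N phi0 phi1 j).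
Proof. intros HN HR Hj. split.
  - apply cellPD_Vhk; auto. split. apply (Phi_cont n); auto. apply Phi_per. apply (Phi_cellPD n); auto.
  - intros phi [Hv H0]. unfold ip.
    rewrite (RInt_ext_R _ (fun x => phi x * Phi N phi0 phi1 j x)) by (intros; ring).
    fold (ip phi (Phi N phi0 phi1 j)). rewrite (ip_Phi_PD n); auto.
    rewrite !H0. ring. destruct Hv as [[Hc _] _]. exact Hc. apply Vhk_cellPD; auto. Qed.
Lemma pi1_spec n N phi0 phi1 v : (1 <= N)%nat -> RefOK n phi0 phi1 -> Cont v ->
  is_pi1 N (S n) v (pi1 N (S n) v).
Proof. intros HN HR Hv. unfold pi1. apply epsilon_spec.
  set (Ph := Phi N phi0 phi1).
  assert (HPc : forall l, Cont (Ph l)) by (intros; apply (Phi_cont n); auto).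
  assert (HPp : forall l x, Ph l (x + 1) = Ph l x) by (intros; apply Phi_per).
  assert (HPd : forall l, (l < N)%nat -> cellPD N (S n) (Ph l)) by (intros; apply (Phi_cellPD n); auto).
  assert (HPo : forall l phi, (l < N)%nat -> Sh2 N (S n) phi -> RInt (fun x => phi x * Ph l x) 0 1 = 0).
  { intros l phi Hl Hphi. destruct (Phi_Sh1 n N phi0 phi1 l HN HR Hl) as [_ Ho].
    specialize (Ho phi Hphi). unfold ip in Ho.
    rewrite (RInt_ext_R _ (fun x => Ph l x * phi x)) by (intros; ring). exact Ho. }
  destruct (proj_exists N Ph HPc v Hv) as [c Hc].
  set (w := lc N c Ph).
  assert (Hwc : Cont w) by (unfold w; cont).
  exists w. split.
  - split.
    + apply cellPD_Vhk; auto. split. exact Hwc. apply lc_per; auto. apply cellPD_lc; auto.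
    + intros phi Hphi. assert (Cphi : Cont phi) by (destruct Hphi as [[[H _] _] _]; exact H).
      unfold ip. rewrite (RInt_ext_R _ (fun x => phi x * lc N c Ph x)) by (intros; unfold w; ring).
      rewrite RInt_lc by cont. apply sumN_zero. intros l Hl. rewrite HPo; auto. ring.
  - intros psi Hpsi.
    destruct Hpsi as [Vpsi Opsi].
    assert (Cpsi : Cont psi) by (destruct Vpsi as [[H _] _]; exact H).
    assert (Ppsi : forall x, psi (x + 1) = psi x) by (destruct Vpsi as [[_ H] _]; exact H).
    set (z := fun x => psi x - lc N (fun l => psi (node N l)) Ph x).
    assert (Cz : Cont z) by (unfold z; cont).
    assert (Hz2 : Sh2 N (S n) z).
    { split.
      - apply cellPD_Vhk; auto. split. exact Cz. intros x; unfold z. rewrite Ppsi, lc_per; auto.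
        apply (cellPD_ext N (S n) (fun x => 1 * psi x + (-1) * lc N (fun l => psi (node N l)) Ph x)).
        intros; unfold z; ring. apply cellPD_lin. apply Vhk_cellPD; auto. apply cellPD_lc; auto.
      - intros i. unfold z, Ph. rewrite (lc_nodes n); auto. ring. }
    assert (Hzz : RInt (fun x => z x * z x) 0 1 = 0).
    { rewrite (RInt_ext_R _ (fun x => psi x * z x - z x * lc N (fun l => psi (node N l)) Ph x)).
      2:{ intros; unfold z at 1; ring. }
      rewrite RInt_sub by cont. rewrite RInt_lc by cont.
      rewrite sumN_zero. specialize (Opsi z Hz2). unfold ip in Opsi. rewrite Opsi. toR; ring.
      intros l Hl. rewrite HPo; auto. ring. }
    unfold ip.
    rewrite (RInt_ext_R _ (fun x => (v x - w x) * z x + (v x - w x) * lc N (fun l => psi (node N l)) Ph x)).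
    2:{ intros; unfold z; ring. }
    rewrite RInt_add by cont. rewrite ortho_of_null; auto. 2: cont.
    rewrite RInt_lc by cont. rewrite sumN_zero. toR; ring.
    intros l Hl. unfold w. rewrite Hc; auto. ring.
Qed.

Lemma per_Z (F : R -> R) : (forall x, F (x + 1) = F x) -> forall z x, F (x + IZR z) = F x.
Proof. intros HP z x. destruct z as [|p|p].
  - rewrite Rplus_0_r; auto.
  - rewrite <- positive_nat_Z, <- INR_IZR_INZ. apply per_nat; auto.
  - rewrite <- Pos2Z.opp_pos, opp_IZR, <- positive_nat_Z, <- INR_IZR_INZ.
    rewrite <- (per_nat F HP (Pos.to_nat p) (x + - INR (Pos.to_nat p))). f_equal; ring. Qed.

Lemma sup_bound f : Cont f -> (forall x, f (x + 1) = f x) -> forall x, Rabs (f x) <= sup_norm f.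
Proof. intros Hc Hp.
  assert (H01 : forall x, 0 <= x <= 1 -> Rabs (f x) <= sup_norm f).
  { destruct (continuity_ab_maj (fun x => Rabs (f x)) 0 1) as [Mx [HM HMx]]. lra.
    intros c _. apply continuity_pt_filterlim. apply continuous_Rabs_comp. apply Hc.
    unfold sup_norm.
    set (E := fun y => exists x, 0 <= x <= 1 /\ y = Rabs (f x)).
    destruct (Lub_Rbar_correct E) as [Hub Hlub].
    assert (Hle : Rbar_le (Lub_Rbar E) (Rabs (f Mx))).
    { apply Hlub. intros y [x [Hx ->]]. simpl. apply HM; auto. }
    intros x Hx. assert (Hin : Rbar_le (Rabs (f x)) (Lub_Rbar E)) by (apply Hub; exists x; auto).
    destruct (Lub_Rbar E) as [r| |]; simpl in *; auto; contradiction. }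
  intros x. rewrite <- (per_Z f Hp (- Int_part x) x).
  apply H01. rewrite opp_IZR. destruct (base_Int_part x). lra. Qed.

Lemma argmax (a : nat -> R) n : exists j, (j <= n)%nat /\ forall i, (i <= n)%nat -> a i <= a j.
Proof. induction n.
  - exists O. split; auto. intros i Hi. replace i with O by lia. lra.
  - destruct IHn as [j [Hj H]]. destruct (Rle_or_lt (a (S n)) (a j)).
    + exists j. split. lia. intros i Hi. destruct (Nat.eq_dec i (S n)). subst; auto. apply H; lia.
    + exists (S n). split. lia. intros i Hi. destruct (Nat.eq_dec i (S n)). subst; lra.
      assert (a i <= a j) by (apply H; lia). lra. Qed.
Lemma T0_lemma v a h k : sum_f_R0 (fun m => (h * 0) ^ m / INR (fact m) * Derive_n v m a) k = v a.
Proof. induction k. simpl. field. rewrite tech5, IHk. replace ((h * 0) ^ S k) with 0 by (simpl; ring).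
  unfold Rdiv; ring. Qed.

Lemma taylor_interp k v M N z : (1 <= N)%nat -> (1 <= k)%nat ->
  (forall x j, (j <= S k)%nat -> ex_derive_n v j x) ->
  (forall x, Rabs (Derive_n v (S k) x) <= M) ->
  exists p, PD k p /\ p 0 = v (cx N z 0) /\ p 1 = v (cx N z 1) /\
    forall t, 0 <= t <= 1 -> Rabs (v (cx N z t) - p t) <= 2 * M * (/ INR N) ^ (S k).
Proof.
  intros HN Hk Hd HM. assert (HNp := INR_pos N HN).
  assert (HM0 : 0 <= M) by (specialize (HM 0); pose proof (Rabs_pos (Derive_n v (S k) 0)); lra).
  set (h := / INR N). set (a := INR z / INR N).
  assert (Hh : 0 < h) by (unfold h; apply Rinv_0_lt_compat; lra).
  assert (Ecx : forall t, cx N z t = a + h * t) by (intros; unfold cx, a, h; field; lra).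
  set (T := fun t => sum_f_R0 (fun m => (h * t) ^ m / INR (fact m) * Derive_n v m a) k).
  assert (HT : PD k T).
  { apply (PD_ext _ (fun t => sum_f_R0 (fun m => (h ^ m / INR (fact m) * Derive_n v m a) * t ^ m) k)).
    intros t. unfold T. apply sum_eq. intros i _. rewrite Rpow_mult_distr. field. apply INR_fact_neq_0.
    apply PD_of_sum. }
  assert (T0 : T 0 = v a) by (unfold T; apply T0_lemma).
  assert (HB : forall t, 0 <= t <= 1 -> Rabs (v (a + h * t) - T t) <= M * h ^ (S k)).
  { intros t Ht. destruct (Req_dec t 0) as [E|E].
    - subst t. rewrite T0. rewrite Rmult_0_r, Rplus_0_r, Rminus_eq_0, Rabs_R0.
      apply Rmult_le_pos; auto. apply pow_le; lra.
    - destruct (Taylor_Lagrange v k a (a + h * t)) as [zeta [Hz Heq]].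
      assert (0 < h * t) by (apply Rmult_lt_0_compat; lra). lra.
      intros; apply Hd; auto.
      replace (a + h * t - a) with (h * t) in Heq by ring.
      fold (T t) in Heq. rewrite Heq.
      replace (T t + (h * t) ^ S k / INR (fact (S k)) * Derive_n v (S k) zeta - T t)
        with ((h * t) ^ S k / INR (fact (S k)) * Derive_n v (S k) zeta) by ring.
      rewrite Rabs_mult. rewrite Rmult_comm. apply Rmult_le_compat. apply Rabs_pos. apply Rabs_pos.
      apply HM.
      assert (F1 : 1 <= INR (fact (S k))) by (apply (le_INR 1); apply lt_O_fact).
      assert (P1 : 0 <= (h * t) ^ S k) by (apply pow_le; apply Rmult_le_pos; lra).
      assert (P2 : (h * t) ^ S k <= h ^ S k) by (apply pow_incr; split; [apply Rmult_le_pos; lra | nra]).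
      rewrite Rabs_right. 2: { apply Rle_ge. unfold Rdiv. apply Rmult_le_pos; auto. left; apply Rinv_0_lt_compat; lra. }
      apply (Rle_trans _ ((h * t) ^ S k)); auto.
      unfold Rdiv. rewrite <- (Rmult_1_r ((h * t) ^ S k)) at 2. apply Rmult_le_compat_l; auto.
      rewrite <- Rinv_1. apply Rinv_le_contravar; lra. }
  set (del := v (a + h * 1) - T 1).
  exists (fun t => 1 * T t + del * (t * 1)). split.
  { apply PD_lin; auto. apply (PD_mono 1); auto. apply PD_mulx. apply PD_const. }
  split. { rewrite Ecx, T0. replace (a + h * 0) with a by ring. ring. }
  split. { rewrite Ecx. unfold del. ring. }
  intros t Ht. rewrite Ecx.
  replace (v (a + h * t) - (1 * T t + del * (t * 1))) with ((v (a + h * t) - T t) + (- t) * del) by ring.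
  eapply Rle_trans. apply Rabs_triang. rewrite Rabs_mult.
  assert (Hd1 : Rabs del <= M * h ^ S k) by (apply HB; lra).
  assert (Ht1 : Rabs (- t) <= 1) by (rewrite Rabs_Ropp, Rabs_right; lra).
  assert (HB1 := HB t Ht).
  assert (0 <= M * h ^ S k) by (apply Rmult_le_pos; auto; apply pow_le; lra).
  assert (Rabs (- t) * Rabs del <= 1 * (M * h ^ S k)) by (apply Rmult_le_compat; auto using Rabs_pos).
  unfold h in *. lra. Qed.
Lemma local_err n N phi0 phi1 v M Q z phi : (1 <= N)%nat -> RefOK n phi0 phi1 -> (z < N)%nat ->
  Cont v -> (forall x, v (x + 1) = v x) ->
  (forall x j, (j <= S (S n))%nat -> ex_derive_n v j x) ->
  (forall x, Rabs (Derive_n v (S (S n)) x) <= M) ->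
  Cont phi -> (forall t, 0 <= t <= 1 -> Rabs (phi t) <= Q) ->
  (forall b, PD (S n) b -> b 0 = 0 -> b 1 = 0 -> RInt (fun t => b t * phi t) 0 1 = 0) ->
  Rabs (RInt (fun t => (v (cx N z t) - lc N (fun l => v (node N l)) (Phi N phi0 phi1) (cx N z t)) * phi t) 0 1)
    <= 2 * M * (/ INR N) ^ (S (S n)) * Q.
Proof. intros HN HR Hz Hv Hp Hd HM Hphi HQ Horth.
  assert (HNp := INR_pos N HN).
  set (Sv := lc N (fun l => v (node N l)) (Phi N phi0 phi1)).
  destruct (taylor_interp (S n) v M N z HN) as [p (Hp1 & Hp0 & Hpe & Hpb)]; auto. lia.
  assert (HSd : cellPD N (S n) Sv) by (apply cellPD_lc; intros; apply (Phi_cellPD n); auto).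
  destruct (HSd z Hz) as [s [Hs Es]].
  assert (Cvz : Cont (fun t => v (cx N z t))).
  { apply (Cont_ext (fun t => v (/ INR N * t + INR z / INR N))). intros; unfold cx; f_equal; field; lra.
    apply Cont_affine_comp; auto. }
  assert (Cp' := Cont_PD _ _ Hp1). assert (Cs := Cont_PD _ _ Hs).
  assert (Snode : forall i, Sv (node N i) = v (node N i)) by (intros; unfold Sv; apply (lc_nodes n); auto).
  rewrite (RInt_ext_R _ (fun t => (v (cx N z t) - p t) * phi t + (p t - s t) * phi t)).
  2:{ intros t Ht. rewrite Rmin_left, Rmax_right in Ht by lra. fold Sv. rewrite Es by lra. ring. }
  rewrite RInt_add by cont.
  rewrite (Horth (fun t => p t - s t)).
  2:{ apply (PD_ext _ (fun t => 1 * p t + (-1) * s t)). intros; ring. apply PD_lin; auto. }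
  2:{ rewrite Hp0, <- Es by lra. rewrite !cx0. fold Sv. rewrite Snode. ring. }
  2:{ rewrite Hpe, <- Es by lra. rewrite !cx1. fold Sv. rewrite Snode. ring. }
  change (Rabs (RInt (fun t => (v (cx N z t) - p t) * phi t) 0 1 + 0) <= 2 * M * (/ INR N) ^ S (S n) * Q).
  rewrite Rplus_0_r.
  eapply Rle_trans. apply abs_RInt_le_const. lra. apply exR; cont.
  intros t Ht. rewrite Rabs_mult. apply Rmult_le_compat. apply Rabs_pos. apply Rabs_pos.
  apply Hpb; auto. apply HQ; auto. lra. Qed.
Lemma jp_succ_mod N j : (1 <= N)%nat -> (j < N)%nat -> (S (jp N j) mod N = j)%nat.
Proof. intros HN Hj. unfold jp. destruct (Nat.eqb_spec j 0).
  - subst. replace (S (N - 1)) with N by lia. apply Nat.mod_same. lia.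
  - replace (S (j - 1)) with j by lia. apply Nat.mod_small. lia. Qed.

Lemma bound_Q (f : R -> R) : Cont f -> exists Q, 0 <= Q /\ forall t, 0 <= t <= 1 -> Rabs (f t) <= Q.
Proof. intros Hc. destruct (continuity_ab_maj (fun x => Rabs (f x)) 0 1) as [Mx [HM HMx]]. lra.
  intros c _. apply continuity_pt_filterlim. apply continuous_Rabs_comp. apply Hc.
  exists (Rabs (f Mx)). split. apply Rabs_pos. intros; apply HM; auto. Qed.

Theorem main_gen (n : nat) (v : R -> R) : Cpm (S (S n)) v ->
  exists C : R, 0 < C /\ forall N : nat, (1 <= N)%nat -> forall i : nat, (1 <= i <= N)%nat ->
    Rabs (pi1 N (S n) v (node N i) - v (node N i)) <= C * (1 / INR N) ^ (S (S n)) * sup_norm (Derive_n v (S (S n))).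
Proof.
  intros [[Hvc Hvp] Hder].
  assert (Hv : Cont v) by exact Hvc.
  destruct (ref_exists n) as (phi0 & phi1 & HRraw).
  assert (HR : RefOK n phi0 phi1) by exact HRraw. clear HRraw.
  assert (HR' := HR). destruct HR' as (P0 & P1 & H00 & H01 & H10 & H11 & Hort).
  assert (C0 := Cont_PD _ _ P0). assert (C1 := Cont_PD _ _ P1).
  set (M := sup_norm (Derive_n v (S (S n)))).
  destruct (Hder (S (S n))) as [_ [HDc HDp]]. lia.
  assert (HM : forall x, Rabs (Derive_n v (S (S n)) x) <= M) by (apply sup_bound; auto).
  assert (HM0 : 0 <= M) by (specialize (HM 0); pose proof (Rabs_pos (Derive_n v (S (S n)) 0)); lra).
  assert (Hd : forall x j, (j <= S (S n))%nat -> ex_derive_n v j x).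
  { intros x j Hj. destruct j. exact I. apply Hder; lia. }
  set (A0 := RInt (fun t => phi0 t * phi0 t) 0 1).
  set (A1 := RInt (fun t => phi1 t * phi1 t) 0 1).
  set (B := RInt (fun t => phi0 t * phi1 t) 0 1).
  assert (Pm : 0 < A0 + A1 - 2 * B).
  { assert (H := pos_int (fun t => phi0 t - phi1 t)). 
    rewrite (RInt_ext_R _ (fun t => 1 * (phi0 t * phi0 t) + 1 * (phi1 t * phi1 t) + (-2) * (phi0 t * phi1 t))) in H.
    2: intros; ring. rewrite RInt_lin3 in H by cont. fold A0 A1 B in H.
    assert (0 < 1 * A0 + 1 * A1 + -2 * B). apply H. cont. rewrite H00, H10; lra. lra. }
  assert (Pp : 0 < A0 + A1 + 2 * B).
  { assert (H := pos_int (fun t => phi0 t + phi1 t)). 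
    rewrite (RInt_ext_R _ (fun t => 1 * (phi0 t * phi0 t) + 1 * (phi1 t * phi1 t) + 2 * (phi0 t * phi1 t))) in H.
    2: intros; ring. rewrite RInt_lin3 in H by cont. fold A0 A1 B in H.
    assert (0 < 1 * A0 + 1 * A1 + 2 * B). apply H. cont. rewrite H00, H10; lra. lra. }
  set (dl := A0 + A1 - 2 * Rabs B).
  assert (Hdl : 0 < dl) by (unfold dl; destruct (Rabs_pos B); unfold Rabs; destruct (Rcase_abs B); lra).
  destruct (bound_Q phi0 C0) as [Q0 [HQ0 BQ0]].
  destruct (bound_Q phi1 C1) as [Q1 [HQ1 BQ1]].
  set (Q := Q0 + Q1).
  assert (BQa : forall t, 0 <= t <= 1 -> Rabs (phi0 t) <= Q) by (intros; unfold Q; specialize (BQ0 t H); lra).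
  assert (BQb : forall t, 0 <= t <= 1 -> Rabs (phi1 t) <= Q) by (intros; unfold Q; specialize (BQ1 t H); lra).
  exists (4 * Q / dl + 1). split.
  { assert (0 <= 4 * Q / dl) by (unfold Rdiv; apply Rmult_le_pos; [unfold Q; lra | left; apply Rinv_0_lt_compat; auto]). lra. }
  intros N HN i Hi.
  assert (HNp := INR_pos N HN).
  replace (1 / INR N) with (/ INR N) by (field; lra).
  set (hp := (/ INR N) ^ S (S n)).
  assert (Hhp : 0 <= hp) by (apply pow_le; left; apply Rinv_0_lt_compat; lra).
  destruct (pi1_spec n N phi0 phi1 v HN HR Hvc) as [[Vu _] Ou].
  set (u := pi1 N (S n) v) in *.
  set (Sv := lc N (fun l => v (node N l)) (Phi N phi0 phi1)).
  assert (Cu : Cont u) by (destruct Vu as [[H _] _]; exact H).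
  assert (Pu : forall x, u (x + 1) = u x) by (destruct Vu as [[_ H] _]; exact H).
  assert (CS : Cont Sv) by (unfold Sv; apply Cont_lc; intros; apply (Phi_cont n); auto).
  assert (PS : forall x, Sv (x + 1) = Sv x) by (unfold Sv; apply lc_per; intros; apply Phi_per).
  assert (Snode : forall i, Sv (node N i) = v (node N i)) by (intros; unfold Sv; apply (lc_nodes n); auto).
  set (E := fun x => u x - Sv x).
  assert (CE : Cont E) by (unfold E; cont).
  assert (PE : forall x, E (x + 1) = E x) by (intros; unfold E; rewrite Pu, PS; auto).
  assert (DE : cellPD N (S n) E).
  { apply (cellPD_ext N (S n) (fun x => 1 * u x + (-1) * Sv x)). intros; unfold E; ring.
    apply cellPD_lin. apply Vhk_cellPD; auto. unfold Sv; apply cellPD_lc; intros; apply (Phi_cellPD n); auto. }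
  destruct (argmax (fun m => Rabs (E (node N m))) (N - 1)) as [j [Hj Hmax]].
  assert (Hj' : (j < N)%nat) by lia.
  assert (Hall : forall m, Rabs (E (node N m)) <= Rabs (E (node N j))).
  { intros m. rewrite (node_mod E N m); auto. apply Hmax. assert (m mod N < N)%nat by (apply Nat.mod_upper_bound; lia). lia. }
  assert (F1 := ip_Phi_PD n N phi0 phi1 j E HN HR Hj' CE DE). fold A0 A1 B in F1.
  rewrite (node_mod E N (S (jp N j))) in F1 by auto. rewrite jp_succ_mod in F1 by auto.
  assert (F2 : ip E (Phi N phi0 phi1 j) = ip (fun x => v x - Sv x) (Phi N phi0 phi1 j)).
  { assert (Hs1 := Phi_Sh1 n N phi0 phi1 j HN HR Hj'). specialize (Ou _ Hs1).
    unfold ip in *. 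
    rewrite (RInt_ext_R _ (fun x => (v x - Sv x) * Phi N phi0 phi1 j x - (v x - u x) * Phi N phi0 phi1 j x)).
    2: { intros; unfold E; ring. }
    assert (HCp := Phi_cont n N phi0 phi1 j HN HR).
    rewrite RInt_sub by cont. rewrite Ou. toR; ring. }
  rewrite (ip_Phi n N phi0 phi1 j (fun x => v x - Sv x)) in F2; auto. 2: cont.
  assert (L1 := local_err n N phi0 phi1 v M Q j phi0 HN HR Hj' Hvc Hvp Hd HM C0 BQa (fun b Hb b0 b1 => proj1 (Hort b Hb b0 b1))).
  assert (L2 := local_err n N phi0 phi1 v M Q (jp N j) phi1 HN HR (jp_lt N j HN Hj') Hvc Hvp Hd HM C1 BQb (fun b Hb b0 b1 => proj2 (Hort b Hb b0 b1))).
  fold Sv hp in L1, L2.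
  set (I0 := RInt (fun t => (v (cx N j t) - Sv (cx N j t)) * phi0 t) 0 1) in *.
  set (I1 := RInt (fun t => (v (cx N (jp N j) t) - Sv (cx N (jp N j) t)) * phi1 t) 0 1) in *.
  rewrite F1 in F2. clear F1.
  set (ej := E (node N j)) in *.
  set (e1 := E (node N (S j))) in *.
  set (e2 := E (node N (jp N j))) in *.
  assert (He1 : Rabs e1 <= Rabs ej) by apply Hall.
  assert (He2 : Rabs e2 <= Rabs ej) by apply Hall.
  assert (X : ej * A0 + e1 * B + e2 * B + ej * A1 = I0 + I1).
  { apply (Rmult_eq_reg_l (/ INR N)). rewrite F2. auto. apply Rinv_neq_0_compat; lra. }
  assert (Xb : Rabs (I0 + I1) <= 4 * M * hp * Q).
  { eapply Rle_trans. apply Rabs_triang. lra. }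
  assert (Lo : dl * Rabs ej <= Rabs (ej * A0 + e1 * B + e2 * B + ej * A1)).
  { replace (ej * A0 + e1 * B + e2 * B + ej * A1) with ((A0 + A1) * ej - (- (B * (e1 + e2)))) by ring.
    eapply Rle_trans. 2: apply Rabs_triang_inv.
    rewrite Rabs_Ropp, !Rabs_mult. rewrite (Rabs_right (A0 + A1)) by (unfold dl in Hdl; destruct (Rabs_pos B); lra).
    assert (Rabs (e1 + e2) <= 2 * Rabs ej) by (eapply Rle_trans; [apply Rabs_triang | lra]).
    assert (Rabs B * Rabs (e1 + e2) <= Rabs B * (2 * Rabs ej)) by (apply Rmult_le_compat_l; auto using Rabs_pos).
    unfold dl. lra. }
  rewrite X in Lo.
  assert (Fin : Rabs ej <= 4 * Q / dl * M * hp).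
  { apply (Rmult_le_reg_l dl); auto.
    replace (dl * (4 * Q / dl * M * hp)) with (4 * M * hp * Q) by (field; lra). lra. }
  assert (Hi' : Rabs (u (node N i) - v (node N i)) = Rabs (E (node N i))) by (unfold E; rewrite Snode; auto).
  rewrite Hi'. eapply Rle_trans. apply Hall. eapply Rle_trans. apply Fin.
  assert (0 <= M * hp) by (apply Rmult_le_pos; auto).
  replace ((4 * Q / dl + 1) * hp * M) with (4 * Q / dl * M * hp + M * hp) by ring. lra.
Qed.

Theorem lemma2p6 (kappa : nat) (v : R -> R) :
  Cpm (2 * kappa + 1 + 1) v ->
  exists C : R, 0 < C /\
    forall N : nat, (1 <= N)%nat ->
      forall i : nat, (1 <= i <= N)%nat ->
        Rabs (pi1 N (2 * kappa + 1) v (node N i) - v (node N i))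
          <= C * (1 / INR N) ^ (2 * kappa + 1 + 1)
               * sup_norm (Derive_n v (2 * kappa + 1 + 1)).
Proof.
  replace (2 * kappa + 1 + 1)%nat with (S (S (2 * kappa))) by lia.
  replace (2 * kappa + 1)%nat with (S (2 * kappa)) by lia.
  apply main_gen.
Qed.
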